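(* Let $K$ be an algebraically closed field of characteristic zero, $\mathcal{K}=K(t)$, and $\phi_2(z) := \frac{(t+1)(z-1)}{z+t}$, viewed as a self-map of $\mathbb{P}^1(\mathcal{K})$. Let $k \ge 1$. Then $v_\infty(\phi_2^k(0)) = v_\infty(\phi_2^k(1/2)) = 0$, and $v_\infty(k\phi_2^k(\infty) - t) \ge 0$.
   Context: For $g \in K(t)$, $v_\infty(g) = \deg(\text{denominator}) - \deg(\text{numerator})$ (the valuation at the place $t=\infty$). Note $\phi_2(\infty) = t+1$. *)

(* Defs.v *)
From HB Require Import structures.
From mathcomp Require Import all_boot all_order all_algebra.
From mathcomp Require Import generic_quotient fraction.
Set Implicit Arguments. Unset Strict Implicit. Unset Printing Implicit Defensive.
Import Order.TTheory GRing.Theory Num.Theory.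
Local Open Scope ring_scope.

Definition ratfun (K : fieldType) := {fraction {poly K}}.
Definition tvar (K : fieldType) : ratfun K := tofrac 'X.

(* Valuation at t = oo: v(p/q) = deg q - deg p (= size q - size p).
   None encodes +oo (the valuation of 0). Independent of the representative. *)
Definition vinf (K : fieldType) (g : ratfun K) : option int :=
  let r := repr g in
  if (frac r).1 == 0 then None
  else Some ((size (frac r).2)%:Z - (size (frac r).1)%:Z).

Definition vinf_ge0 (K : fieldType) (g : ratfun K) : bool :=
  if vinf g is Some v then (0 <= v)%R else true.

(* P^1(K(t)) as option (ratfun K), None = the point at infinity. *)
(* phi_2(z) = (t+1)(z-1)/(z+t), phi_2(oo) = t+1 (numerator and denominator
   never vanish simultaneously). *)
Definition phi2 (K : fieldType) (z : option (ratfun K)) : option (ratfun K) :=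
  match z with
  | None => Some (tvar K + 1)
  | Some x => if x + tvar K == 0 then None
              else Some ((tvar K + 1) * (x - 1) / (x + tvar K))
  end.

(* Main.v *)
Require Import Defs.
From HB Require Import structures.
From mathcomp Require Import all_boot all_order all_algebra.
From mathcomp Require Import generic_quotient fraction.
From mathcomp Require Import zify ring.
Import Order.TTheory GRing.Theory Num.Theory.
Local Open Scope ring_scope.
Local Open Scope quotient_scope.

Lemma pi_ratio (R: idomainType) (x : {ratio R}) :
  (\pi_{fraction R} x) * tofrac (\d_x) = tofrac (\n_x).
Proof.
unlock tofrac. rewrite !piE. apply/eqP; rewrite FracField.equivf_def.
rewrite /FracField.mulf /= !numden_Ratio ?mulf_neq0 ?oner_eq0 ?denom_ratioP //.
by rewrite !mulr1 mulrC.
Qed.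

Lemma vinf_frac (K : fieldType) (a b : {poly K}) : b != 0 ->
  vinf (tofrac a / tofrac b : ratfun K) =
  if a == 0 then None else Some ((size b)%:Z - (size a)%:Z).
Proof.
move=> b0; rewrite /vinf.
set g := (tofrac a / tofrac b : ratfun K).
have := @pi_ratio _ (repr g); rewrite reprK.
set n := (frac (repr g)).1; set d := (frac (repr g)).2.
have d0 : d != 0 by apply: denom_ratioP.
have b0' : tofrac b != 0 :> ratfun K by rewrite tofrac_eq0.
rewrite /g => /(congr1 (fun u => u * tofrac b)).
rewrite mulrAC divfK // -!tofracM => /eqP; rewrite tofrac_eq => /eqP E.
have : (n == 0) = (a == 0).
  apply/eqP/eqP => H.
    by move: E; rewrite H mul0r => /eqP; rewrite mulf_eq0 (negPf d0) orbF => /eqP.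
  by move: E; rewrite H mul0r => /esym/eqP; rewrite mulf_eq0 (negPf b0) orbF => /eqP.
move=> ->; case: eqP => // /eqP a0; congr Some.
have n0 : n != 0 by apply: contra a0 => /eqP n0; move: E; rewrite n0 mul0r => /eqP; rewrite mulf_eq0 (negPf d0) orbF.
have := congr1 (fun p : {poly K} => size p) E; rewrite /= !size_mul //.
have := size_poly_gt0 a; have := size_poly_gt0 b; have := size_poly_gt0 n; have := size_poly_gt0 d.
rewrite a0 b0 n0 d0.
move: (size a) (size b) (size n) (size d) => sa sb sn sd h1 h2 h3 h4 H.
lia.
Qed.

Section Main.
Variable K : fieldType.
Local Notation P := {poly K}.
Local Notation F x := (tofrac x : ratfun K).

Definition step (p : P * P) : P * P := (('X + 1) * (p.1 - p.2), p.1 + 'X * p.2).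
Definition ab p n := iter n step p.

Lemma gen_id (L : fieldType) (A B T : L) : B != 0 -> A + T * B != 0 ->
  (T + 1) * (A / B - 1) / (A / B + T) = (T + 1) * (A - B) / (A + T * B).
Proof. move=> h1 h2; field; by rewrite h1 h2. Qed.

Lemma gen_id2 (L : fieldType) (A B T : L) : B != 0 -> A / B + T = (A + T * B) / B.
Proof. move=> h1; field; by rewrite h1. Qed.

Lemma phi_step (a b : P) : b != 0 -> a + 'X * b != 0 ->
  phi2 (Some (F a / F b)) = Some (F (('X + 1) * (a - b)) / F (a + 'X * b)).
Proof.
move=> b0 c0; rewrite /phi2 /tvar.
have fb : F b != 0 by rewrite tofrac_eq0.
have fc : F a + F 'X * F b != 0 by rewrite -tofracM -tofracD tofrac_eq0.
rewrite (@gen_id2 _ (F a) (F b) (F 'X) fb).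
rewrite mulf_eq0 invr_eq0 (negPf fb) (negPf fc) /=; congr Some.
rewrite -(@gen_id2 _ (F a) (F b) (F 'X) fb).
rewrite (@gen_id _ (F a) (F b) (F 'X) fb fc).
by rewrite tofracM tofracD tofracB tofrac1 tofracD tofracM.
Qed.

Lemma iter_ab p n : (forall j, (j <= n)%N -> (ab p j).2 != 0) ->
  iter n (@phi2 K) (Some (F p.1 / F p.2)) = Some (F (ab p n).1 / F (ab p n).2).
Proof.
elim: n => [|n IH] H //=.
rewrite IH; last by move=> j hj; apply: H; lia.
rewrite phi_step //; first by apply: H; lia.
by have := H n.+1 (leqnn _).
Qed.

Lemma sz_CX (c : P) j : (size c <= 1)%N -> (size (c * 'X^j)%R <= j.+1)%N.
Proof.
move=> h; have := size_polyMleq c ('X^j); rewrite size_polyXn; lia.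
Qed.

Lemma sz_Cr (c : K) (r : P) n : (size r <= n)%N -> (size (c%:P * r)%R <= n)%N.
Proof.
move=> h; have := size_polyMleq c%:P r; have := size_polyC_leq1 c; lia.
Qed.

Lemma sz_X1 (r : P) n : (size r <= n)%N -> (size (('X + 1) * r)%R <= n.+1)%N.
Proof.
move=> h; have := size_polyMleq ('X + 1) r.
have -> : size ('X + 1 : P) = 2%N by rewrite -polyC1 size_XaddC.
lia.
Qed.

Lemma sz_X (r : P) n : (size r <= n)%N -> (size ('X * r)%R <= n.+1)%N.
Proof.
move=> h; have := size_polyMleq 'X r; rewrite size_polyX; lia.
Qed.

Lemma sz_D (r s : P) n : (size r <= n)%N -> (size s <= n)%N -> (size (r + s)%R <= n)%N.
Proof. move=> h1 h2; have := size_polyD r s; lia. Qed.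

Lemma sz_N (r : P) n : (size r <= n)%N -> (size (- r)%R <= n)%N.
Proof. by rewrite size_polyN. Qed.

Lemma sz_lead (e : K) (s : P) j : e != 0 -> (size s <= j)%N ->
  size (e%:P * 'X^j + s) = j.+1.
Proof.
move=> e0 h; rewrite size_polyDl size_Cmul // size_polyXn //; lia.
Qed.

Lemma invA (c d : K) j : exists r s : P, (size r <= j)%N /\ (size s <= j)%N /\
  (ab (c%:P, d%:P) j).1 = (c - j%:R * d)%:P * 'X^j + r /\
  (ab (c%:P, d%:P) j).2 = d%:P * 'X^j + s.
Proof.
elim: j => [|j [r [s [hr [hs [E1 E2]]]]]].
  exists 0, 0; rewrite size_poly0; split => //; split => //; split;
    by rewrite /= expr0 mulr1 addr0 ?mul0r ?subr0.
exists ((c - j%:R * d)%:P * 'X^j - d%:P * 'X^j + ('X + 1) * (r - s)).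
exists ((c - j%:R * d)%:P * 'X^j + r + 'X * s).
split.
  apply: sz_D; first apply: sz_D; first by apply: sz_CX; rewrite size_polyC_leq1.
    by apply: sz_N; apply: sz_CX; rewrite size_polyC_leq1.
  by apply: sz_X1; apply: sz_D => //; apply: sz_N; lia.
split.
  apply: sz_D; first apply: sz_D; first by apply: sz_CX; rewrite size_polyC_leq1.
    lia.
  by apply: sz_X.
rewrite /ab iterS -/(ab _ j) /step /= E1 E2.
split; rewrite !rmorphB !rmorphM /= !rmorph_nat !exprS; ring.
Qed.

Definition pinf : P * P := ('X + 1, 1).

Lemma invInf j : exists r s : P, (size r <= j.+1)%N /\ (size s <= j)%N /\
  (ab pinf j).1 = 'X^(j.+1) + r /\
  (ab pinf j).2 = (j.+1%:R : K)%:P * 'X^j + s.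
Proof.
elim: j => [|j [r [s [hr [hs [E1 E2]]]]]].
  exists 1, 0; split; first by rewrite -polyC1 size_polyC_leq1.
  rewrite size_poly0; split => //; split; by rewrite /= ?expr1 ?expr0 ?mulr1 ?addr0 ?polyC1.
exists ('X^(j.+1) + ('X + 1) * (r - (j.+1%:R : K)%:P * 'X^j - s)).
exists (r + 'X * s).
split.
  apply: sz_D; first by rewrite size_polyXn.
  apply: sz_X1; apply: sz_D; first apply: sz_D; first lia.
    by apply: sz_N; apply: sz_CX; rewrite size_polyC_leq1.
  by apply: sz_N; lia.
split; first by apply: sz_D; [lia | apply: sz_X].
rewrite /ab iterS -/(ab _ j) /step /= E1 E2.
split; rewrite !rmorph_nat !exprS; ring.
Qed.

Lemma gen_id3 (L : fieldType) (N A B T : L) : B != 0 -> N * (A / B) - T = (N * A - T * B) / B.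
Proof. move=> h1; field; by rewrite h1. Qed.

Lemma partA (c d : K) k : d != 0 -> c - k%:R * d != 0 ->
  exists g, iter k (@phi2 K) (Some (F c%:P / F d%:P)) = Some g /\ vinf g = Some 0%Z.
Proof.
move=> d0 ck0.
have bnz : forall j, (ab (c%:P, d%:P) j).2 != 0.
  move=> j; have [r [s [hr [hs [E1 E2]]]]] := invA c d j.
  by rewrite E2 -size_poly_eq0 sz_lead.
have [r [s [hr [hs [E1 E2]]]]] := invA c d k.
exists (F (ab (c%:P, d%:P) k).1 / F (ab (c%:P, d%:P) k).2); split.
  exact: (@iter_ab (c%:P, d%:P) k (fun j _ => bnz j)).
rewrite vinf_frac // E1 E2.
have -> : ((c - k%:R * d)%:P * 'X^k + r == 0) = false.
  by apply/negbTE; rewrite -size_poly_eq0 sz_lead.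
by rewrite !sz_lead // subrr.
Qed.

Lemma partInf j : (forall n, (n.+1%:R : K) != 0) ->
  exists g : ratfun K, iter (j.+1) (@phi2 K) None = Some g /\ vinf_ge0 ((j.+1)%:R * g - tvar K).
Proof.
move=> nz.
have bnz : forall i, (ab pinf i).2 != 0.
  move=> i; have [r [s [hr [hs [E1 E2]]]]] := invInf i.
  by rewrite E2 -size_poly_eq0 sz_lead.
have E0 : (@phi2 K None) = Some (F pinf.1 / F pinf.2).
  by rewrite /= tofrac1 divr1 tofracD tofrac1 /tvar.
exists (F (ab pinf j).1 / F (ab pinf j).2); split.
  by rewrite iterSr E0; exact: (@iter_ab pinf j (fun i _ => bnz i)).
have fb : F (ab pinf j).2 != 0 by rewrite tofrac_eq0.
rewrite (@gen_id3 _ (j.+1)%:R (F (ab pinf j).1) (F (ab pinf j).2) (tvar K) fb).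
have HN : ((j.+1)%:R : ratfun K) = F (j.+1)%:R by rewrite tofracMn tofrac1.
rewrite HN /tvar -!tofracM -tofracB /vinf_ge0 vinf_frac //.
have [r [s [hr [hs [E1 E2]]]]] := invInf j.
rewrite /pinf E1 E2.
have -> : (j.+1)%:R * ('X^(j.+1) + r) - 'X * ((j.+1)%:R%:P * 'X^j + s)
    = (j.+1)%:R * r - 'X * s :> P.
  by rewrite polyC_natr exprS; ring.
case: eqP => // _; rewrite sz_lead //.
have : (size ((j.+1)%:R * r - 'X * s : P)%R <= j.+1)%N.
  apply: sz_D; last by apply: sz_N; apply: sz_X.
  by rewrite -polyC_natr; apply: sz_Cr.
move: (size _) => m hm; rewrite subr_ge0 lez_nat //.
Qed.

End Main.

Theorem lemma5p16 (K : closedFieldType) (hchar : [pchar K] =i pred0)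
  (k : nat) (hk : (1 <= k)%N) :
  (exists g : ratfun K, iter k (@phi2 K) (Some 0) = Some g /\ vinf g = Some 0%Z) /\
  (exists g : ratfun K, iter k (@phi2 K) (Some (2%:R^-1)) = Some g /\ vinf g = Some 0%Z) /\
  (exists g : ratfun K, iter k (@phi2 K) None = Some g /\
     vinf_ge0 (k%:R * g - tvar K)).
Proof.
have nat0 := (pcharf0P K).1 hchar.
have nz : forall n, (n.+1%:R : K) != 0 by move=> n; rewrite nat0.
case: k hk => // j _.
split.
  have := @partA K 0 1 j.+1 (oner_neq0 _).
  rewrite sub0r oppr_eq0 mulr1 nz polyC0 polyC1 tofrac0 mul0r.
  by apply.
split.
  have := @partA K 1 2%:R j.+1 (nz 1%N).
  have -> : (2%:R : K)%:P = 2%:R by rewrite polyC_natr.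
  rewrite polyC1 tofrac1 mul1r (tofracMn _ 1) tofrac1.
  apply.
  rewrite -natrM subr_eq0.
  have -> : (j.+1 * 2 = (j + j + 1).+1)%N by lia.
  rewrite -addn1 natrD eq_sym -subr_eq0 addrK nat0; first by rewrite addn1.
exact: (@partInf K j nz).
Qed.
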